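(* If a spherical curve $P$ has a coherent bigon, then $r(P)\le 2$.
   Context: A spherical curve is a smooth immersion $P:S^1\to S^2$ whose self-intersections are finitely many transverse double points, called crossings. It is oriented and has at least one crossing. Regions are the components of $S^2\setminus P(S^1)$, and edges are the arcs of the curve between consecutive crossings. An $n$-gon is a region bounded by $n$ edges; a bigon is a $2$-gon. A region is coherent if its boundary edges, with the orientations induced from $P$, all run in the same rotational direction around the region; otherwise it is incoherent. In Gauss-word terms, a bigon with crossings $y,z$ is coherent iff the word has the form $y z\,W_1\,z y\,W_2$, and incoherent iff it has the form $y z\,W_1\,y z\,W_2$. The Gauss word is the cyclic word of crossings met in one traversal of the curve; each crossing appears twice. Crossings $a,b$ are interlaced if their occurrences alternate $a\dots b\dots a\dots b$. A crossing is reducible if no crossing is interlaced with it; equivalently, only three distinct regions meet at it. $P$ is reducible if it has a reducible crossing, and reduced otherwise. The inverse-half-twisted splice $I$ at a crossing $p$ takes the curve with cyclic Gauss word $p\,A\,p\,B$ to the curve with Gauss word $\overline{A}\,B$, where $\overline{A}$ is $A$ reversed. Geometrically, $p$ is smoothed in the unique way giving a single closed curve, and the result is re-oriented. The reductivity $r(P)$ is the minimal number of successive applications of $I$ needed to reach a reducible spherical curve; $r(P)=0$ if $P$ is reducible. *)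

(* Defs.v *)
(* Combinatorial model of spherical curves: a spherical
   curve is encoded by its (linearised) Gauss word together with the local
   orientation of each crossing (a signed Gauss word); it lives on the sphere
   iff the associated 4-regular ribbon graph has Euler characteristic 2. *)
From mathcomp Require Import all_boot.
Unset Printing Implicit Defensive.

(* It is read cyclically; position i of the word is the i-th passage through
   a crossing, and edge i is the arc from position i to position i+1 (mod). *)
Definition gauss_word (w : seq nat) : bool :=
  (0 < size w) && all (fun x => count_mem x w == 2) w.

Definition ncross (w : seq nat) : nat := size (undup w).

(* the other position at which the crossing met at position j is met again *)
Definition partner (w : seq nat) (j : nat) : nat :=
  let c := nth 0 w j in
  let i := index c w in
  if i == j then i.+1 + index c (drop i.+1 w) else i.

(* the element k mod n of 'I_n (n > 0 is witnessed by i : 'I_n) *)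
Definition ord_mod (n : nat) (i : 'I_n) (k : nat) : 'I_n :=
  Ordinal (ltn_pmod k (leq_ltn_trans (leq0n i) (ltn_ord i))).
Arguments ord_mod {n}.

(* A dart is a side of an edge: (i, true) = edge i traversed along the curve
   orientation, (i, false) = edge i traversed against it; in both cases the
   region bounded is on the left of the direction of travel.
   Half-edges at position j: (j, out) = start of edge j, (j, in) = end of
   edge j-1.  Sign convention: for crossing c met first at position a and
   then at position b > a, [s c = true] means that the strand through b
   crosses the strand through a from its right to its left.  Then the
   clockwise successor of a half-edge (j, k) at its crossing is
   (partner j, k (+) f) with f = s c if j is the first passage and
   f = ~~ s c otherwise.  The face permutation: arrive via a half-edge, leave
   along its clockwise successor. *)
Definition next_dart (w : seq nat) (s : nat -> bool)
    (d : 'I_(size w) * bool) : 'I_(size w) * bool :=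
  let pos : 'I_(size w) := if d.2 then ordS d.1 else d.1 in
  let k : bool := ~~ d.2 in            (* arrival half-edge is out iff backward *)
  let j := nat_of_ord pos in
  let j' := partner w j in
  let c := nth 0 w j in
  let f := if j < j' then s c else ~~ s c in
  let pos' : 'I_(size w) := ord_mod pos j' in  (* j' < size w anyway *)
  if k (+) f then (pos', true) else (ord_pred pos', false).

Definition nregions (w : seq nat) (s : nat -> bool) : nat :=
  fcard (next_dart w s) {: 'I_(size w) * bool}.

(* (w, s) is a spherical curve: Euler characteristic V - E + F = 2, i.e.
   F = n + 2 (V = n crossings, E = 2n edges; the graph is connected) *)
Definition spherical (w : seq nat) (s : nat -> bool) : bool :=
  gauss_word w && (nregions w s == ncross w + 2).

Definition bigon_at (w : seq nat) (s : nat -> bool) (d : 'I_(size w) * bool) :=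
  order (next_dart w s) d == 2.

(* it is coherent: both boundary edges run in the same rotational direction *)
Definition coherent_bigon_at (w : seq nat) (s : nat -> bool)
    (d : 'I_(size w) * bool) :=
  bigon_at w s d && (d.2 == (next_dart w s d).2).

Definition has_coherent_bigon (w : seq nat) (s : nat -> bool) : Prop :=
  exists d : 'I_(size w) * bool, coherent_bigon_at w s d.

Definition between (w : seq nat) (a : nat) : seq nat :=
  let i := index a w in
  let rest := drop i.+1 w in
  take (index a rest) rest.

Definition interlaced (w : seq nat) (a b : nat) : bool :=
  (a \in w) && (b \in w) && (count_mem b (between w a) == 1).

Definition reducible_crossing (w : seq nat) (a : nat) : bool :=
  (a \in w) && ~~ has (interlaced w a) w.

Definition reducible (w : seq nat) : bool := has (reducible_crossing w) w.

(* inverse-half-twisted splice: cyclic word  p A p B  |->  rev(A) B.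
   For the linear word X p A p Y the cyclic word is p A p (Y X). *)
Definition splice (w : seq nat) (p : nat) : seq nat :=
  let i := index p w in
  let X := take i w in
  let rest := drop i.+1 w in
  let k := index p rest in
  let A := take k rest in
  let Y := drop k.+1 rest in
  rev A ++ Y ++ X.

(* reducible after at most k successive splices, i.e. r(P) <= k *)
Fixpoint reductivity_le (k : nat) (w : seq nat) : bool :=
  reducible w ||
  (if k is k'.+1 then has (fun p => reductivity_le k' (splice w p)) w else false).

(* Main.v *)
Require Import Defs.
From mathcomp Require Import all_boot zify.

Lemma split_first (v : seq nat) (p : nat) :
  p \in v -> exists X R : seq nat, v = X ++ p :: R /\ p \notin X.
Proof.
elim: v => [//|a v IH]; rewrite in_cons; case: (eqVneq p a) => [-> _|ne /= H].
  by exists [::], v.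
have [X [R [-> nX]]] := IH H.
by exists (a :: X), R; split => //; rewrite in_cons negb_or ne.
Qed.

Lemma decomp (v : seq nat) (p : nat) : count_mem p v = 2 ->
  exists X M Y : seq nat, v = X ++ p :: M ++ p :: Y /\ p \notin X /\ p \notin M /\ p \notin Y.
Proof.
move=> c2.
have pv : p \in v by rewrite -has_pred1 has_count c2.
have [X [R [eV nX]]] := split_first _ _ pv.
have cX : count_mem p X = 0 by apply/eqP; rewrite -leqn0 leqNgt -has_count has_pred1.
have cR : count_mem p R = 1 by move: c2; rewrite eV count_cat cX /= eqxx; lia.
have pR : p \in R by rewrite -has_pred1 has_count cR.
have [M [Y [eR nM]]] := split_first _ _ pR.
have cM : count_mem p M = 0 by apply/eqP; rewrite -leqn0 leqNgt -has_count has_pred1.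
have cY : count_mem p Y = 0 by move: cR; rewrite eR count_cat cM /= eqxx; lia.
exists X, M, Y; do !split => //. by rewrite eV eR.
by rewrite -has_pred1 has_count cY.
Qed.

Lemma index_form (X R : seq nat) (p : nat) : p \notin X -> index p (X ++ p :: R) = size X.
Proof. by move=> nX; rewrite index_cat (negbTE nX) /= eqxx addn0. Qed.

Lemma drop_form (X R : seq nat) (p : nat) : drop (size X).+1 (X ++ p :: R) = R.
Proof. by rewrite drop_cat ltnNge leqnSn /= subSnn /= drop0. Qed.

Lemma splice_form (X M Y : seq nat) (p : nat) : p \notin X -> p \notin M ->
  splice (X ++ p :: M ++ p :: Y) p = rev M ++ Y ++ X.
Proof.
move=> nX nM; rewrite /splice index_form // take_size_cat //.
rewrite drop_form index_form // take_size_cat //.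
by rewrite drop_form.
Qed.

Lemma between_form (X M Y : seq nat) (p : nat) : p \notin X -> p \notin M ->
  between (X ++ p :: M ++ p :: Y) p = M.
Proof.
move=> nX nM; rewrite /between index_form //.
by rewrite drop_form index_form // take_size_cat.
Qed.

Lemma rot_cases (X M Y : seq nat) a k :
  let v := X ++ a :: M ++ a :: Y in
  (exists X' Y', rot k v = X' ++ a :: M ++ a :: Y' /\ Y' ++ X' = Y ++ X
        /\ (forall q, q \in X' ++ Y' = (q \in X ++ Y)))
  \/ (exists M1 M2, M = M1 ++ M2 /\ rot k v = M2 ++ a :: (Y ++ X) ++ a :: M1).
Proof.
move=> v.
have sv : size v = size X + size M + size Y + 2.
  rewrite /v size_cat /= size_cat /=. lia.
case: (leqP (size v) k) => hk.
  left; exists X, Y; rewrite rot_oversize //; split => //; split => //.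
case: (leqP k (size X)) => h1.
  left; exists (drop k X), (Y ++ take k X).
  have e : v = take k X ++ (drop k X ++ a :: M ++ a :: Y).
    by rewrite /v catA cat_take_drop.
  rewrite e -{1}(size_takel h1) rot_size_cat; split; first by rewrite -catA /= -catA.
  split.
    by rewrite -!catA cat_take_drop.
  move=> q; rewrite !mem_cat -{3}(cat_take_drop k X) mem_cat. by case: (q \in take k X); case: (q \in drop k X); case: (q \in Y).
case: (leqP k (size X + size M).+1) => h2.
  right; exists (take (k - (size X).+1) M), (drop (k - (size X).+1) M); split.
    by rewrite cat_take_drop.
  have e : v = (X ++ a :: take (k - (size X).+1) M) ++ (drop (k - (size X).+1) M ++ a :: Y).
    by rewrite /v -catA /= catA cat_take_drop.
  have sz : size (X ++ a :: take (k - (size X).+1) M) = k.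
    rewrite size_cat /= size_takel; lia.
  by rewrite e -{1}sz rot_size_cat /= -!catA.
left; exists (drop (k - (size X + size M).+2) Y ++ X), (take (k - (size X + size M).+2) Y).
have e : v = (X ++ a :: M ++ a :: take (k - (size X + size M).+2) Y) ++ drop (k - (size X + size M).+2) Y.
  by rewrite /v -catA /= -catA /= cat_take_drop.
have sz : size (X ++ a :: M ++ a :: take (k - (size X + size M).+2) Y) = k.
  rewrite size_cat /= size_cat /= size_takel; lia.
rewrite e -{1}sz rot_size_cat -!catA; split => //; split.
  by rewrite catA cat_take_drop.
move=> q; rewrite !mem_cat -{3}(cat_take_drop (k - (size X + size M).+2) Y) mem_cat.
by case: (q \in take _ Y); case: (q \in drop _ Y); case: (q \in X).
Qed.

Definition g2 (v : seq nat) := all (fun x => count_mem x v == 2) v.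

Lemma g2_count (v : seq nat) x : g2 v -> x \in v -> count_mem x v = 2.
Proof. by move=> /allP H /H /eqP. Qed.

Lemma count_rot (P : pred nat) (v : seq nat) k : count P (rot k v) = count P v.
Proof. by rewrite /rot count_cat addnC -count_cat cat_take_drop. Qed.

Lemma all_rot (P : pred nat) (v : seq nat) k : all P (rot k v) = all P v.
Proof. by rewrite /rot all_cat andbC -all_cat cat_take_drop. Qed.

Lemma g2_rot v k : g2 v -> g2 (rot k v).
Proof.
rewrite /g2 all_rot => H; apply/allP => x xv; rewrite count_rot.
exact: (allP H).
Qed.

Lemma g2_rev v : g2 v -> g2 (rev v).
Proof.
rewrite /g2 all_rev => H; apply/allP => x xv; rewrite count_rev.
exact: (allP H).
Qed.

Lemma notin0 (x : nat) s : x \notin s -> count_mem x s = 0.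
Proof. by move/count_memPn. Qed.

Lemma interlaced_rot v k a b : g2 v -> interlaced (rot k v) a b = interlaced v a b.
Proof.
move=> g; rewrite /interlaced !mem_rot.
case av: (a \in v) => //; case bv: (b \in v) => //=.
have [X [M [Y [eV [nX [nM nY]]]]]] := decomp _ _ (g2_count _ _ g av).
have cb := g2_count _ _ g bv.
rewrite eV in cb *; rewrite between_form //.
have [[X' [Y' [-> [eYX mem]]]] | [M1 [M2 [eM ->]]]] := rot_cases X M Y a k.
  rewrite between_form //.
  by apply/negP => aX; move: (mem a); rewrite !mem_cat aX (negbTE nX) (negbTE nY).
have nM2 : a \notin M2 by move: nM; rewrite eM mem_cat negb_or => /andP[].
rewrite between_form //; last by rewrite mem_cat negb_or nX nY.
move: cb; rewrite !count_cat /= eM count_cat /=.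
case: (eqVneq a b) => [<-|nab] /=.
  by rewrite !notin0 // -eM.
lia.
Qed.

Lemma interlaced_rev v a b : g2 v -> interlaced (rev v) a b = interlaced v a b.
Proof.
move=> g; rewrite /interlaced !mem_rev.
case av: (a \in v) => //; case bv: (b \in v) => //=.
have [X [M [Y [eV [nX [nM nY]]]]]] := decomp _ _ (g2_count _ _ g av).
rewrite eV between_form //.
have -> : rev (X ++ a :: M ++ a :: Y) = rev Y ++ a :: rev M ++ a :: rev X.
  by rewrite rev_cat rev_cons rev_cat rev_cons -!cats1 -!catA.
by rewrite between_form ?count_rev // mem_rev.
Qed.

Lemma reducible_rot v k : g2 v -> reducible (rot k v) = reducible v.

Proof.
move=> g; rewrite /reducible has_rot; apply: eq_in_has => a _.
rewrite /reducible_crossing mem_rot has_rot; congr (_ && ~~ _).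
by apply: eq_in_has => b _; rewrite interlaced_rot.
Qed.

Lemma reducible_rev v : g2 v -> reducible (rev v) = reducible v.
Proof.
move=> g; rewrite /reducible has_rev; apply: eq_in_has => a _.
rewrite /reducible_crossing mem_rev has_rev; congr (_ && ~~ _).
by apply: eq_in_has => b _; rewrite interlaced_rev.
Qed.

Lemma splice_rot v k p : g2 v -> p \in v ->
  splice (rot k v) p = splice v p \/ splice (rot k v) p = rev (splice v p).
Proof.
move=> g pv.
have [X [M [Y [eV [nX [nM nY]]]]]] := decomp _ _ (g2_count _ _ g pv).
rewrite eV splice_form //.
have [[X' [Y' [-> [eYX mem]]]] | [M1 [M2 [eM ->]]]] := rot_cases X M Y p k.
  left; rewrite splice_form ?eYX //.
  by apply/negP => aX; move: (mem p); rewrite !mem_cat aX (negbTE nX) (negbTE nY).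
have nM2 : p \notin M2 by move: nM; rewrite eM mem_cat negb_or => /andP[].
right; rewrite splice_form //; last by rewrite mem_cat negb_or nX nY.
by rewrite !rev_cat revK eM -!catA.
Qed.

Lemma splice_rev v p : g2 v -> p \in v ->
  exists m, splice (rev v) p = rot m (rev (splice v p)).
Proof.
move=> g pv.
have [X [M [Y [eV [nX [nM nY]]]]]] := decomp _ _ (g2_count _ _ g pv).
rewrite eV splice_form //.
have -> : rev (X ++ p :: M ++ p :: Y) = rev Y ++ p :: rev M ++ p :: rev X.
  by rewrite rev_cat rev_cons rev_cat rev_cons -!cats1 -!catA.
rewrite splice_form ?mem_rev // revK !rev_cat revK.
exists (size (rev X ++ rev Y)).
by rewrite rot_size_cat catA.
Qed.

Lemma g2_splice v p : g2 v -> p \in v -> g2 (splice v p).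
Proof.
move=> g pv.
have [X [M [Y [eV [nX [nM nY]]]]]] := decomp _ _ (g2_count _ _ g pv).
move: g; rewrite eV splice_form // => g.
apply/allP => x; rewrite !mem_cat mem_rev => xin.
have xv : x \in X ++ p :: M ++ p :: Y.
  by case/orP: xin => [h|/orP[h|h]]; rewrite !(mem_cat, in_cons) h ?orbT.
have := g2_count _ _ g xv.
have nxp : x != p.
  apply/negP => /eqP ex; move: xin; rewrite ex (negbTE nX) (negbTE nM) (negbTE nY) //.
rewrite !count_cat /= count_cat /= count_rev eq_sym (negbTE nxp) => h.
by apply/eqP; move: h; rewrite !add0n; lia.
Qed.

Inductive ceq (u : seq nat) : seq nat -> Prop :=
| ceq_refl : ceq u u
| ceq_rot v k : ceq u v -> ceq u (rot k v)
| ceq_rev v : ceq u v -> ceq u (rev v).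

Lemma ceq_g2 u v : ceq u v -> g2 u -> g2 v.
Proof. by elim => // [w k _ IH|w _ IH] g; [apply: g2_rot | apply: g2_rev]; apply: IH. Qed.

Lemma ceq_mem u v x : ceq u v -> (x \in v) = (x \in u).
Proof. by elim => // [w k _ IH|w _ IH]; rewrite ?mem_rot ?mem_rev. Qed.

Lemma ceq_red u v : ceq u v -> g2 u -> reducible v = reducible u.
Proof.
elim => // [w k c IH|w c IH] g.
  by rewrite reducible_rot ?IH //; exact: (ceq_g2 _ _ c g).
by rewrite reducible_rev ?IH //; exact: (ceq_g2 _ _ c g).
Qed.

Lemma ceq_splice u v p : ceq u v -> g2 u -> p \in u -> ceq (splice u p) (splice v p).
Proof.
elim => [|w k c IH|w c IH] g pu; first exact: ceq_refl.
  have gw := ceq_g2 _ _ c g; have pw : p \in w by rewrite (ceq_mem _ _ _ c).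
  have [->|->] := splice_rot _ k _ gw pw; first exact: IH.
  by apply: ceq_rev; apply: IH.
have gw := ceq_g2 _ _ c g; have pw : p \in w by rewrite (ceq_mem _ _ _ c).
have [m ->] := splice_rev _ _ gw pw.
by apply: ceq_rot; apply: ceq_rev; apply: IH.
Qed.

Lemma count_pos (x : nat) s : (0 < count_mem x s) = (x \in s).
Proof. by rewrite -has_count has_pred1. Qed.

Lemma decomp1 (A : seq nat) x : count_mem x A = 1 ->
  exists A1 A2 : seq nat, A = A1 ++ x :: A2 /\ x \notin A1 /\ x \notin A2.
Proof.
move=> c1; have xA : x \in A by rewrite -count_pos c1.
have [A1 [A2 [e n1]]] := split_first _ _ xA.
exists A1, A2; split => //; split => //.
move: c1; rewrite e count_cat notin0 //= eqxx /= => h.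
apply/count_memPn; rewrite add0n add1n in h; by case: h.
Qed.

Lemma red_adj (P Q : seq nat) z : z \notin P -> reducible (P ++ z :: z :: Q).
Proof.
move=> nP; apply/hasP; exists z; first by rewrite mem_cat in_cons eqxx orbT.
rewrite /reducible_crossing mem_cat in_cons eqxx orbT /=.
apply/hasPn => b _; rewrite /interlaced.
by rewrite (between_form P [::] Q) // andbF.
Qed.

Lemma canon (y z : nat) (A B w : seq nat) :
  g2 (y :: z :: A ++ z :: y :: B) -> ceq (y :: z :: A ++ z :: y :: B) w ->
  reductivity_le 2 w.
Proof.
set r := y :: z :: A ++ z :: y :: B => g c.
have yr : y \in r by rewrite in_cons eqxx.
have zr : z \in r by rewrite !in_cons eqxx orbT.
have cy := g2_count _ _ g yr; have cz := g2_count _ _ g zr.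
have nyz : y != z.
  by apply/negP => /eqP e; move: cy; rewrite /r e /= count_cat /= eqxx /=; lia.
have hy : count_mem y A + count_mem y B = 0.
  by move: cy; rewrite /r /= count_cat /= eqxx eq_sym (negbTE nyz) /=; lia.
have hz : count_mem z A + count_mem z B = 0.
  by move: cz; rewrite /r /= count_cat /= eqxx (negbTE nyz) /=; lia.
have nyA : y \notin A by apply/count_memPn; lia.
have nyB : y \notin B by apply/count_memPn; lia.
have nzA : z \notin A by apply/count_memPn; lia.
have nzB : z \notin B by apply/count_memPn; lia.
rewrite /=; apply/orP; right.
case hA: (has (fun x => count_mem x A == 1) A).
  case/hasP: hA => x xA /eqP cxA.
  have xr : x \in r by rewrite /r !in_cons mem_cat xA !orbT.
  have nxy : x != y by apply/negP => /eqP e; move: xA; rewrite e (negbTE nyA).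
  have nxz : x != z by apply/negP => /eqP e; move: xA; rewrite e (negbTE nzA).
  have cxB : count_mem x B = 1.
    move: (g2_count _ _ g xr); rewrite /r /= count_cat /= cxA.
    rewrite eq_sym (negbTE nxy) eq_sym (negbTE nxz) /=; lia.
  have [A1 [A2 [eA [n1 n2]]]] := decomp1 _ _ cxA.
  have [B1 [B2 [eB [m1 m2]]]] := decomp1 _ _ cxB.
  have [yA1 yA2] : y \notin A1 /\ y \notin A2.
    by move: nyA; rewrite eA mem_cat in_cons !negb_or => /andP[-> /andP[_ ->]].
  have [zA1 zA2] : z \notin A1 /\ z \notin A2.
    by move: nzA; rewrite eA mem_cat in_cons !negb_or => /andP[-> /andP[_ ->]].
  have [yB1 yB2] : y \notin B1 /\ y \notin B2.
    by move: nyB; rewrite eB mem_cat in_cons !negb_or => /andP[-> /andP[_ ->]].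
  have [zB1 zB2] : z \notin B1 /\ z \notin B2.
    by move: nzB; rewrite eB mem_cat in_cons !negb_or => /andP[-> /andP[_ ->]].
  have er : r = (y :: z :: A1) ++ x :: (A2 ++ z :: y :: B1) ++ x :: B2.
    by rewrite /r eA eB /= -!catA.
  have nX : x \notin y :: z :: A1 by rewrite !in_cons negb_or nxy negb_or nxz.
  have nM : x \notin A2 ++ z :: y :: B1.
    by rewrite mem_cat !in_cons !negb_or n2 nxz nxy.
  have sx : splice r x = rev B1 ++ y :: (z :: rev A2 ++ B2) ++ y :: (z :: A1).
    rewrite er splice_form // !rev_cat /= !rev_cons -!cats1 -!catA /=.
    by [].
  apply/hasP; exists x; first by rewrite (ceq_mem _ _ _ c).
  have c1 := ceq_splice _ _ x c g xr.
  have g1 := g2_splice _ _ g xr.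
  have ys : y \in splice r x by rewrite sx mem_cat in_cons eqxx orbT.
  rewrite /=; apply/orP; right.
  apply/hasP; exists y; first by rewrite (ceq_mem _ _ _ c1).
  rewrite /= orbF (ceq_red _ _ (ceq_splice _ _ y c1 g1 ys)).
    rewrite sx splice_form; last first.
    - by rewrite in_cons mem_cat mem_rev !negb_or nyz yA2 yB2.
    - by rewrite mem_rev.
    rewrite rev_cons rev_cat revK -cats1 -!catA /=.
    by rewrite catA; apply: red_adj; rewrite mem_cat mem_rev negb_or zB2 zA2.
  exact: g2_splice.
apply/hasP; exists y; first by rewrite (ceq_mem _ _ _ c).
rewrite /=; apply/orP; left.
rewrite (ceq_red _ _ (ceq_splice _ _ y c g yr)); last exact: g2_splice.
have er : r = [::] ++ y :: (z :: A ++ [:: z]) ++ y :: B by rewrite /r /= -catA.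
rewrite er splice_form //; last by rewrite in_cons mem_cat mem_seq1 !negb_or nyz nyA.
rewrite rev_cons rev_cat /= cats0.
apply/hasP; exists z; first by rewrite in_cons eqxx.
rewrite /reducible_crossing in_cons eqxx orTb andTb.
apply/hasPn => b _; rewrite /interlaced.
have -> : z :: (rcons (rev A) z ++ B) = [::] ++ z :: rev A ++ z :: B by rewrite -cats1 -catA.
rewrite between_form ?mem_rev // count_rev.
case bA: (b \in A).
  by have := hasPn (negbT hA) b bA => /= /negbTE ->; rewrite andbF.
by rewrite notin0 ?bA // andbF.
Qed.

Lemma mod2 a n : a < n + n -> a %% n = if a < n then a else a - n.
Proof.
case: ifP => h; first by rewrite modn_small.
move=> h2; have -> : a = (a - n) + n by lia.
rewrite modnDr modn_small; lia.
Qed.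

Lemma nth_rot0 (w : seq nat) i t : i < size w -> t < size w ->
  nth 0 (rot i w) t = nth 0 w (if i + t < size w then i + t else i + t - size w).
Proof.
move=> hi ht; rewrite /rot nth_cat size_drop.
case: ifP => h1.
  by rewrite nth_drop ifT //; lia.
rewrite nth_take; last lia.
by rewrite ifF; [congr nth; lia | lia].
Qed.

Lemma split2 (r : seq nat) q : 2 <= q -> q.+1 < size r ->
  r = nth 0 r 0 :: nth 0 r 1 :: take (q - 2) (drop 2 r) ++ nth 0 r q :: nth 0 r q.+1 :: drop q.+2 r.
Proof.
move=> h1 h2.
have e1 : drop q r = nth 0 r q :: nth 0 r q.+1 :: drop q.+2 r.
  by rewrite (drop_nth 0) 1?(drop_nth 0 (n := q.+1)) //; lia.
have e2 : r = nth 0 r 0 :: nth 0 r 1 :: drop 2 r.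
  by rewrite -{1}(drop0 r) (drop_nth 0) 1?(drop_nth 0 (n := 1)) //; lia.
rewrite {1}e2; congr (_ :: _ :: _).
by rewrite -e1 -{1}(cat_take_drop (q - 2) (drop 2 r)) drop_drop; congr (_ ++ drop _ _); lia.
Qed.

Lemma pattern (w : seq nat) (i p : nat) : g2 w -> i < size w -> p < size w ->
  nth 0 w i = nth 0 w ((p.+1) %% size w) -> nth 0 w ((i.+1) %% size w) = nth 0 w p ->
  p != i -> p != (i.+1) %% size w -> (p.+1) %% size w != i -> reductivity_le 2 w.
Proof.
move=> g hi hp.
rewrite !mod2; try lia.
move=> ey ez n1 n2 n3.
set n := size w in hi hp ey ez n1 n2 n3.
set p' := if i <= p then p - i else p + n - i.
have hp' : 2 <= p' /\ p'.+1 < n.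
  move: n1 n2 n3; rewrite /p'; case: ifP; case: ifP; case: ifP => //; lia.
set r := rot i w.
have sr : size r = n by rewrite size_rot.
have er := split2 r p' (proj1 hp') (eq_ind_r (fun m => p'.+1 < m) (proj2 hp') sr).
have r0 : nth 0 r 0 = nth 0 w i by rewrite nth_rot0 // ?addn0 ?ifT //; lia.
have r1 : nth 0 r 1 = nth 0 w p.
  rewrite nth_rot0 //; last lia.
  by rewrite -ez; congr nth; case: ifP; case: ifP; lia.
have rq : nth 0 r p' = nth 0 w p.
  rewrite nth_rot0 //; last lia.
  by congr nth; rewrite /p'; case: ifP; case: ifP; lia.
have rq1 : nth 0 r p'.+1 = nth 0 w i.
  rewrite nth_rot0 //; last lia.
  by rewrite ey; congr nth; rewrite /p'; case: ifP; case: ifP; case: ifP; lia.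
rewrite r0 r1 rq rq1 in er.
have gr : g2 r by apply: g2_rot.
have cr : ceq r w.
  have := ceq_rot r r (size r - i) (ceq_refl r).
  by rewrite -/(rotr i r) rotK.
move: gr cr; rewrite er; apply: canon.
Qed.

Lemma nth_form (X M Y : seq nat) c : nth 0 (X ++ c :: M ++ c :: Y) (size X) = c.
Proof. by rewrite nth_cat ltnn subnn. Qed.

Lemma nth_form2 (X M Y : seq nat) c : nth 0 (X ++ c :: M ++ c :: Y) (size X + size M + 1) = c.
Proof.
rewrite nth_cat ifF; last lia.
have -> : size X + size M + 1 - size X = (size M).+1 by lia.
by rewrite /= nth_cat ltnn subnn.
Qed.

Lemma pos_form (X M Y : seq nat) c j : c \notin X -> c \notin M -> c \notin Y ->
  j < size (X ++ c :: M ++ c :: Y) -> nth 0 (X ++ c :: M ++ c :: Y) j = c ->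
  j = size X \/ j = size X + size M + 1.
Proof.
move=> nX nM nY hj; rewrite nth_cat; case: ifP => h1.
  by move=> e; move: nX; rewrite -e mem_nth.
case: (eqVneq j (size X)) => [->|h2]; first by left.
have -> : j - size X = (j - size X - 1).+1 by lia.
rewrite /= nth_cat; case: ifP => h3.
  by move=> e; move: nM; rewrite -e mem_nth.
case: (eqVneq (j - size X - 1) (size M)) => [h4|h4]; first by right; lia.
have -> : j - size X - 1 - size M = (j - size X - 1 - size M - 1).+1 by lia.
move=> e; move: nY; rewrite -e /= mem_nth //.
move: hj; rewrite size_cat /= size_cat /=; lia.
Qed.

Lemma partner_form (X M Y : seq nat) c : c \notin X -> c \notin M ->
  partner (X ++ c :: M ++ c :: Y) (size X) = size X + size M + 1 /\
  partner (X ++ c :: M ++ c :: Y) (size X + size M + 1) = size X.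
Proof.
move=> nX nM; rewrite /partner nth_form nth_form2 index_form // eqxx drop_form index_form //.
split; first lia.
by rewrite ifF //; apply/negbTE; rewrite neq_ltn; apply/orP; left; lia.
Qed.

Lemma partner_spec (w : seq nat) j : g2 w -> j < size w ->
  partner w j < size w /\ partner w j != j /\ nth 0 w (partner w j) = nth 0 w j
  /\ partner w (partner w j) = j.
Proof.
move=> g hj.
have [c [ec cw]] : exists c, nth 0 w j = c /\ c \in w by exists (nth 0 w j); rewrite mem_nth.
rewrite ec.
have [X [M [Y [eV [nX [nM nY]]]]]] := decomp _ _ (g2_count _ _ g cw).
have [pa pb] := partner_form X M Y _ nX nM.
rewrite eV in hj ec *.
have := pos_form X M Y c j nX nM nY hj ec.
move: hj; rewrite size_cat /= size_cat /= => hj.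
case=> ->.
  rewrite pa pb nth_form2; do !split => //; lia.
rewrite pb pa nth_form; do !split => //; lia.
Qed.

Lemma next_spec (w : seq nat) s (d : 'I_(size w) * bool) : g2 w ->
  let pos := if d.2 then (d.1.+1) %% size w else val d.1 in
  ((next_dart w s d).2 = true -> val (next_dart w s d).1 = partner w pos) /\
  ((next_dart w s d).2 = false -> val (next_dart w s d).1 = (partner w pos + size w).-1 %% size w).
Proof.
move=> g pos.
have hpos : pos < size w.
  rewrite /pos; case: (d.2) => /=; last exact: ltn_ord.
  apply: ltn_pmod; have := ltn_ord d.1; lia.
have [hq _] := partner_spec w pos g hpos.
rewrite /next_dart.
set P : 'I_(size w) := if d.2 then ordS d.1 else d.1.
have eP : val P = pos by rewrite /P /pos; case: (d.2).
case: (_ (+) _) => /=; split => // _; rewrite eP.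
  by rewrite modn_small.
by rewrite (modn_small hq).
Qed.

Lemma order2 (T : finType) (f : T -> T) x : order f x == 2 ->
  f x != x /\ (f (f x) = x \/ f (f x) = f x).
Proof.
move=> h.
have eo : orbit f x = [:: x; f x] by rewrite /orbit (eqP h).
have u := orbit_uniq f x; rewrite eo /= andbT in_cons orbF in u.
split; first by rewrite eq_sym.
have : f (f x) \in orbit f x by rewrite -fconnect_orbit (fconnect_iter f 2).
by rewrite eo !in_cons orbF => /orP[] /eqP; [left|right].
Qed.

Lemma predmod a n : a < n -> (a + n).-1 %% n = if a == 0 then n.-1 else a.-1.
Proof.
move=> h; rewrite mod2; last lia.
case: ifP; case: ifP; lia.
Qed.

Lemma succmod x n : x < n -> x.+1 %% n = if x.+1 == n then 0 else x.+1.
Proof. move=> h; rewrite mod2; last lia. case: ifP; case: ifP; lia. Qed.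

Lemma succmod_inj a b n : a < n -> b < n -> a.+1 %% n = b.+1 %% n -> a = b.
Proof. move=> ha hb; rewrite !succmod //; case: ifP; case: ifP; lia. Qed.

Lemma predmod_inj a b n : a < n -> b < n -> (a + n).-1 %% n = (b + n).-1 %% n -> a = b.
Proof. move=> ha hb; rewrite !predmod //; case: ifP; case: ifP; lia. Qed.

Lemma succ_pred a n : a < n -> ((a + n).-1 %% n).+1 %% n = a.
Proof.
move=> ha; rewrite predmod //; case: ifP => h0.
  rewrite succmod; last lia. rewrite ifT; lia.
rewrite succmod; last lia. rewrite ifF; lia.
Qed.

Lemma pair_eq n (d e : 'I_n * bool) : val d.1 = val e.1 -> d.2 = e.2 -> d = e.
Proof. by case: d => [a b]; case: e => [a' b'] /= /val_inj -> ->. Qed.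

Theorem mainTheorem3 (w : seq nat) (s : nat -> bool) :
  spherical w s -> has_coherent_bigon w s -> reductivity_le 2 w.
Proof.
move=> /andP[/andP[n0 g] _] [d /andP[hb hc]].
have g2w : g2 w := g.
have [ne e2] := order2 _ (next_dart w s) d hb.
set e := next_dart w s d in hc ne e2.
have [ea eb] := next_spec w s d g2w.
have [fa fb] := next_spec w s e g2w.
rewrite -/e in ea eb.
have hi := ltn_ord d.1; have hp := ltn_ord e.1.
set i := val d.1 in hi ea eb fa fb *.
set p := val e.1 in hp ea eb fa fb *.
have ne' : p != i.
  apply/negP => /eqP epi; move: ne; rewrite (pair_eq _ e d) ?eqxx //.
  exact/esym/eqP.
have PS := partner_spec w _ g2w.
case hb2 : d.2 in hc ea eb.
  have he2 : e.2 = true by rewrite -(eqP hc).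
  have hpi : p = partner w (i.+1 %% size w) by apply: ea.
  have hsi : i.+1 %% size w < size w by rewrite ltn_pmod.
  have [q1 [q2 [q3 q4]]] := PS _ hsi.
  case: e2 => e2; rewrite e2 he2 /= in fa.
    have hip : i = partner w (p.+1 %% size w) by apply: fa.
    have hsp : p.+1 %% size w < size w by rewrite ltn_pmod.
    have [r1 [r2 [r3 r4]]] := PS _ hsp.
    apply: (pattern w i p) => //.
    - by rewrite hip r3.
    - by rewrite hpi q3.
    - by rewrite hpi.
    - by rewrite [X in _ != X]hip eq_sym.
  have hpp : p = partner w (p.+1 %% size w) by apply: fa.
  have hsp : p.+1 %% size w < size w by rewrite ltn_pmod.
  have [r1 [r2 [r3 r4]]] := PS _ hsp.
  have : p.+1 %% size w = i.+1 %% size w by rewrite -r4 -hpp hpi q4.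
  by move/succmod_inj => /(_ hp hi) /eqP; rewrite (negbTE ne').
have he2 : e.2 = false by rewrite -(eqP hc).
have hpi : p = (partner w i + size w).-1 %% size w by apply: eb.
have [q1 [q2 [q3 q4]]] := PS _ hi.
have [r1 [r2 [r3 r4]]] := PS _ hp.
case: e2 => e2; rewrite e2 he2 /= in fb.
  have hip : i = (partner w p + size w).-1 %% size w by apply: fb.
  have ep1 : p.+1 %% size w = partner w i.
    by rewrite hpi succ_pred.
  have ei1 : i.+1 %% size w = partner w p.
    by rewrite hip succ_pred.
  apply: (pattern w i p) => //.
  - by rewrite ep1 q3.
  - by rewrite ei1 r3.
  - by rewrite ei1 eq_sym.
  - by rewrite ep1.
have hpp : p = (partner w p + size w).-1 %% size w by apply: fb.
have : partner w p = partner w i.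
  by apply: (predmod_inj _ _ (size w)) => //; rewrite -hpp -hpi.
move=> h; have epi : p = i := etrans (esym r4) (etrans (congr1 (partner w) h) q4).
by move: ne'; rewrite epi eqxx.
Qed.
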